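(* Let $n\ge3$ and let $S=(s_{ij})$ be an $n\times n$ magic square, with $x_{ij}=j-\frac{n-1}{2}$, $y_{ij}=\frac{n-1}{2}-i$, $z_{ij}=s_{ij}-\frac{n^2+1}{2}$. Then the covariance matrix of $(X,Y,Z)$ has the form \[ \Sigma=\begin{pmatrix}\mathrm{Var}(X)&\mathrm{Cov}(X,Y)&0\\ \mathrm{Cov}(X,Y)&\mathrm{Var}(Y)&0\\ 0&0&\mathrm{Var}(Z)\end{pmatrix}; \] in particular $Z$ is uncorrelated with both $X$ and $Y$.
   Context: A magic square of order $n$ is an arrangement of $1,\dots,n^2$ (each used once) in an $n\times n$ grid such that every row, every column, and both main diagonals sum to $n(n^2+1)/2$. $X,Y,Z$ are the functions $(i,j)\mapsto x_{ij},y_{ij},z_{ij}$ regarded as random variables under the uniform distribution on the $n^2$ cells; $\mathrm{Var}$ and $\mathrm{Cov}$ are the corresponding population variance and covariance (normalized by $1/n^2$). *)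

(* Defs.v *)
From mathcomp Require Import all_boot all_order all_algebra.
Set Implicit Arguments. Unset Strict Implicit. Unset Printing Implicit Defensive.
Import Order.TTheory GRing.Theory Num.Theory.
Local Open Scope ring_scope.

Definition magic_square (n : nat) (s : 'I_n -> 'I_n -> nat) : Prop :=
  [/\ (forall i j, 1 <= s i j <= n ^ 2)%N,
      (forall i j k l, s i j = s k l -> i = k /\ j = l) &
     [/\
      (forall i, \sum_(j < n) s i j = n * (n ^ 2 + 1) %/ 2)%N,
      (forall j, \sum_(i < n) s i j = n * (n ^ 2 + 1) %/ 2)%N,
      (\sum_(i < n) s i i = n * (n ^ 2 + 1) %/ 2)%N &
      (\sum_(i < n) s i (rev_ord i) = n * (n ^ 2 + 1) %/ 2)%N]].

(* expectation under the uniform distribution on the n^2 cells *)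
Definition cell_mean {R : realFieldType} (n : nat) (f : 'I_n -> 'I_n -> R) : R :=
  (n ^ 2)%:R^-1 * \sum_(i < n) \sum_(j < n) f i j.

Definition cell_cov {R : realFieldType} (n : nat) (f g : 'I_n -> 'I_n -> R) : R :=
  cell_mean (fun i j => (f i j - cell_mean f) * (g i j - cell_mean g)).

Definition cell_var {R : realFieldType} (n : nat) (f : 'I_n -> 'I_n -> R) : R :=
  cell_cov f f.

Definition cov_matrix3 {R : realFieldType} (n : nat)
  (X Y Z : 'I_n -> 'I_n -> R) : 'M[R]_3 :=
  \matrix_(a < 3, b < 3)
    cell_cov (match nat_of_ord a with 0 => X | 1 => Y | _ => Z end)%N
             (match nat_of_ord b with 0 => X | 1 => Y | _ => Z end)%N.

Definition Xc {R : realFieldType} (n : nat) (i j : 'I_n) : R :=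
  (j : nat)%:R - ((n : nat)%:R - 1) / 2.
Definition Yc {R : realFieldType} (n : nat) (i j : 'I_n) : R :=
  ((n : nat)%:R - 1) / 2 - (i : nat)%:R.
Definition Zc {R : realFieldType} (n : nat) (s : 'I_n -> 'I_n -> nat) (i j : 'I_n) : R :=
  (s i j)%:R - ((n ^ 2)%N%:R + 1) / 2.

(* Main.v *)
Require Import Defs.
From mathcomp Require Import all_boot all_order all_algebra.
Import Order.TTheory GRing.Theory Num.Theory.
From mathcomp Require Import ring.
Local Open Scope ring_scope.

Lemma magic_sumR (R : realFieldType) (n : nat) :
  ((n * (n ^ 2 + 1) %/ 2)%N%:R : R) = n%:R * ((n ^ 2)%N%:R + 1) / 2.
Proof.
have h2 : (2 %| n * (n ^ 2 + 1))%N.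
  rewrite dvdn2 oddM oddD oddX /=; by case: (odd n).
have -> : ((n * (n ^ 2 + 1) %/ 2)%N%:R : R) = (n * (n ^ 2 + 1))%N%:R / 2.
  rewrite -{2}(divnK h2) natrM mulfK //; by rewrite pnatr_eq0.
by rewrite natrM natrD.
Qed.

Section S.
Variables (R : realFieldType) (n : nat) (s : 'I_n -> 'I_n -> nat).
Hypothesis hs : magic_square s.

Lemma colZ j : \sum_(i < n) (@Zc R n s i j) = 0.
Proof.
case: hs => _ _ [_ hc _ _].
rewrite /Zc sumrB -natr_sum hc magic_sumR sumr_const card_ord.
rewrite -mulr_natl; ring.
Qed.

Lemma rowZ i : \sum_(j < n) (@Zc R n s i j) = 0.
Proof.
case: hs => _ _ [hr _ _ _].
rewrite /Zc sumrB -natr_sum hr magic_sumR sumr_const card_ord.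
rewrite -mulr_natl; ring.
Qed.

Lemma meanZ : cell_mean (@Zc R n s) = 0.
Proof. by rewrite /cell_mean big1 ?mulr0 // => i _; rewrite rowZ. Qed.

Lemma covXZ : cell_cov (@Xc R n) (@Zc R n s) = 0.
Proof.
rewrite /cell_cov meanZ /cell_mean exchange_big /=.
rewrite big1 ?mulr0 // => j _.
under eq_bigr do rewrite subr0.
by rewrite /Xc -mulr_sumr colZ mulr0.
Qed.

Lemma covZX : cell_cov (@Zc R n s) (@Xc R n) = 0.
Proof.
rewrite -covXZ /cell_cov; congr (_ * _).
by apply: eq_bigr => i _; apply: eq_bigr => j _; rewrite mulrC.
Qed.

Lemma covYZ : cell_cov (@Yc R n) (@Zc R n s) = 0.
Proof.
rewrite /cell_cov meanZ /cell_mean.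
rewrite big1 ?mulr0 // => i _.
under eq_bigr do rewrite subr0.
by rewrite /Yc -mulr_sumr rowZ mulr0.
Qed.

Lemma covZY : cell_cov (@Zc R n s) (@Yc R n) = 0.
Proof.
rewrite -covYZ /cell_cov; congr (_ * _).
by apply: eq_bigr => i _; apply: eq_bigr => j _; rewrite mulrC.
Qed.
End S.

Theorem mainTheorem3 (R : realFieldType) (n : nat) (s : 'I_n -> 'I_n -> nat) :
  (3 <= n)%N -> magic_square s ->
  cov_matrix3 (@Xc R n) (@Yc R n) (@Zc R n s) =
  \matrix_(a < 3, b < 3)
    (match nat_of_ord a, nat_of_ord b with
     | O, O => cell_var (@Xc R n)
     | O, S O => cell_cov (@Xc R n) (@Yc R n)
     | S O, O => cell_cov (@Xc R n) (@Yc R n)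
     | S O, S O => cell_var (@Yc R n)
     | S (S O), S (S O) => cell_var (@Zc R n s)
     | _, _ => 0
     end).
Proof.
move=> _ hs; apply/matrixP => a b; rewrite !mxE.
case: a => [[|[|[|a]]] Ha] //; case: b => [[|[|[|b]]] Hb] //=;
  rewrite ?covXZ ?covZX ?covYZ ?covZY //.
rewrite /cell_cov /cell_mean; congr (_ * _).
by apply: eq_bigr => i _; apply: eq_bigr => j _; rewrite mulrC.
Qed.
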